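(* Let $(M,\bullet)$ be a monoid with unit $e$. Then ${\sf T}M$, equipped with the partial compositions $\circ_i$ and the right actions of the symmetric groups described in the context, is a symmetric set-operad (with unit $(e)\in{\sf T}M(1)$). Moreover, the assignment $M\mapsto {\sf T}M$, $\theta\mapsto{\sf T}\theta$ is a functor from the category of monoids (with monoid morphisms) to the category of set-operads (with set-operad morphisms). Furthermore, ${\sf T}$ preserves injections and surjections: if $\theta:M\to N$ is an injective (resp. surjective) monoid morphism, then ${\sf T}\theta$ is injective (resp. surjective).
   Context: For a monoid $(M,\bullet)$, let ${\sf T}M:=\biguplus_{n\geq 1}{\sf T}M(n)$ where ${\sf T}M(n):=M^n$ is the set of words $(x_1,\dots,x_n)$ of length $n$ over the alphabet $M$ (elements of arity $n$). For $x\in{\sf T}M(n)$, $y\in{\sf T}M(m)$ and $1\leq i\leq n$, define $x\circ_i y:=(x_1,\dots,x_{i-1},x_i\bullet y_1,\dots,x_i\bullet y_m,x_{i+1},\dots,x_n)\in{\sf T}M(n+m-1)$. For $x\in{\sf T}M(n)$ and $\sigma\in\mathfrak{S}_n$, define $x\cdot\sigma:=(x_{\sigma(1)},\dots,x_{\sigma(n)})$. For a monoid morphism $\theta:M\to N$, define ${\sf T}\theta:{\sf T}M\to{\sf T}N$ by ${\sf T}\theta(x_1,\dots,x_n):=(\theta(x_1),\dots,\theta(x_n))$. *)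

(* Defs.v *)
From mathcomp Require Import all_boot fingroup perm.

Set Implicit Arguments.
Unset Strict Implicit.
Unset Printing Implicit Defensive.

Record monoid := MkMonoid {
  mcar :> Type;
  mop : mcar -> mcar -> mcar;
  munit : mcar;
  _ : forall x y z, mop x (mop y z) = mop (mop x y) z;
  _ : forall x, mop munit x = x;
  _ : forall x, mop x munit = x
}.
Arguments mop {m}.
Arguments munit {m}.

Definition monoid_morph (M N : monoid) (f : M -> N) : Prop :=
  (forall x y : M, f (mop x y) = mop (f x) (f y)) /\ f munit = munit.

(* permn s k = s(k) for 1 <= k <= n (1-based), k otherwise. *)
Definition permn (n : nat) (s : 'S_n) (k : nat) : nat :=
  match @insub nat (fun j => j < n) _ k.-1 with
  | Some j => (s j).+1
  | None => k
  end.

(* The partial composition s o_i t of the symmetric (permutation) operad,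
   s in S_n, t in S_m, as a map on 1-based indices {1,...,n+m-1}:
   the value s(i) is blown up into the block s(i), ..., s(i)+m-1
   permuted by t, and the other values are shifted accordingly. *)
Definition pcompn (n m : nat) (s : 'S_n) (t : 'S_m) (i k : nat) : nat :=
  let si := permn s i in
  let sh j := if j < si then j else j + m - 1 in
  if k < i then sh (permn s k)
  else if k < i + m then si + permn t (k - i + 1) - 1
  else sh (permn s (k - m + 1)).

(* Symmetric set-operads, presented as graded sets: a carrier X with    *)
(* an arity map ar; the component of arity n (n >= 1) is               *)
(* {x : X | ar x = n}.  Elements of arity 0 are not part of the operad *)
(* (all axioms only speak about elements of arity >= 1).               *)
(*   comp x y i   : the partial composition x o_i y (1 <= i <= ar x)   *)
(*   act n x s    : the right action x . s of s in S_n (ar x = n)      *)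
Definition is_sym_set_operad (X : Type) (ar : X -> nat) (one : X)
    (comp : X -> X -> nat -> X) (act : forall n, X -> 'S_n -> X) : Prop :=
      ar one = 1 /\
      (forall x y i, 0 < ar x -> 0 < ar y -> 0 < i <= ar x ->
         ar (comp x y i) = ar x + ar y - 1) /\
      (forall n x (s : 'S_n), ar x = n -> 0 < n -> ar (act n x s) = n) /\
      (forall x, 0 < ar x -> comp one x 1 = x) /\
      (forall x i, 0 < i <= ar x -> comp x one i = x) /\
      (forall x y z i j, 0 < ar x -> 0 < ar y -> 0 < ar z ->
         0 < i <= ar x -> 0 < j <= ar y ->
         comp (comp x y i) z (i + j - 1) = comp x (comp y z j) i) /\
      (forall x y z i j, 0 < ar x -> 0 < ar y -> 0 < ar z ->
         0 < i -> i < j -> j <= ar x ->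
         comp (comp x y i) z (j + ar y - 1) = comp (comp x z j) y i) /\
      (* right action of the symmetric groups: x.id = x, (x.s).t = x.(s o t),
         where (s o t)(k) = s(t(k)), i.e. the mathcomp product t * s *)
      (forall n x, ar x = n -> 0 < n -> act n x 1%g = x) /\
      (forall n x (s t : 'S_n), ar x = n -> 0 < n ->
         act n (act n x s) t = act n x (t * s)%g) /\
      (forall n m x y (s : 'S_n) (t : 'S_m) i, ar x = n -> ar y = m ->
         0 < n -> 0 < m -> 0 < i <= n ->
         forall r : 'S_(n + m - 1),
           (forall k : 'I_(n + m - 1), (r k).+1 = pcompn s t i k.+1) ->
           comp (act n x s) (act m y t) i
           = act (n + m - 1) (comp x y (permn s i)) r).

Definition sym_set_operad_morph
    (X : Type) (arX : X -> nat) (oneX : X)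
    (compX : X -> X -> nat -> X) (actX : forall n, X -> 'S_n -> X)
    (Y : Type) (arY : Y -> nat) (oneY : Y)
    (compY : Y -> Y -> nat -> Y) (actY : forall n, Y -> 'S_n -> Y)
    (f : X -> Y) : Prop :=
  [/\ (forall x, 0 < arX x -> arY (f x) = arX x),
      f oneX = oneY,
      (forall x y i, 0 < arX x -> 0 < arX y -> 0 < i <= arX x ->
         f (compX x y i) = compY (f x) (f y) i) &
      (forall n x (s : 'S_n), arX x = n -> 0 < n ->
         f (actX n x s) = actY n (f x) s)].

(* T M = words over M (seq M, arity = length; only nonempty words,     *)
(* i.e. arity >= 1, belong to T M).                                    *)
Section T.
Variable M : monoid.

Definition T_ar (x : seq M) : nat := size x.

Definition T_one : seq M := [:: (munit : M)].

(* x o_i y = (x_1,...,x_{i-1}, x_i y_1, ..., x_i y_m, x_{i+1}, ..., x_n) *)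
Definition T_comp (x y : seq M) (i : nat) : seq M :=
  take i.-1 x ++ map (mop (nth munit x i.-1)) y ++ drop i x.

Definition T_act (n : nat) (x : seq M) (s : 'S_n) : seq M :=
  [seq nth munit x (s j) | j <- enum 'I_n].

End T.

Definition T_map (M N : monoid) (theta : M -> N) : seq M -> seq N :=
  map theta.

(* Main.v *)
Require Import Defs.
From mathcomp Require Import all_boot fingroup perm zify.
Section S.
Variable M : monoid.
Lemma mA (x y z : M) : mop x (mop y z) = mop (mop x y) z. Proof. by case: M x y z. Qed.
Lemma m1x (x : M) : mop munit x = x. Proof. by case: M x. Qed.
Lemma mx1 (x : M) : mop x munit = x. Proof. by case: M x. Qed.

Lemma size_comp (x y : seq M) i : 0 < i <= size x ->
  size (T_comp x y i) = size x + size y - 1.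
Proof. move=> /andP[h1 h2]; rewrite /T_comp !size_cat size_take size_map size_drop.
case: ifP => ?; lia. Qed.

Lemma nth_comp (x y : seq M) i k : 0 < i <= size x ->
  nth munit (T_comp x y i) k =
  if k < i.-1 then nth munit x k else if k < i.-1 + size y then
    mop (nth munit x i.-1) (nth munit y (k - i.-1)) else nth munit x (k - size y + 1).
Proof.
move=> /andP[h1 h2]; rewrite /T_comp nth_cat size_take.
have -> : (if i.-1 < size x then i.-1 else size x) = i.-1 by case: ifP => //; lia.
case: ifP => hk; first by rewrite nth_take.
rewrite nth_cat size_map; case: ifP => hk2.
  have -> : k < i.-1 + size y by lia.
  by rewrite (nth_map munit).
have -> : (k < i.-1 + size y) = false by lia.
rewrite nth_drop; congr nth; lia.
Qed.

Lemma permnE n (s : 'S_n) k (H : k < n) : permn s k.+1 = (s (Ordinal H)).+1.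
Proof. rewrite /permn /= insubT /=; congr _.+1; congr (s _); exact: val_inj. Qed.

Lemma nth_act n (x : seq M) (s : 'S_n) k (H : k < n) :
  nth munit (T_act x s) k = nth munit x (s (Ordinal H)).
Proof.
rewrite /T_act (nth_map (Ordinal H)); last by rewrite size_enum_ord.
congr (nth _ _ (val (s _))).
exact: (nth_ord_enum (Ordinal H) (Ordinal H)).
Qed.
Ltac fin := solve [ exfalso; lia | rewrite ?mA; repeat (f_equal; try lia) ].

Lemma seq_assoc (x y z : seq M) i j : 0 < size x -> 0 < size y -> 0 < size z ->
  0 < i <= size x -> 0 < j <= size y ->
  T_comp (T_comp x y i) z (i + j - 1) = T_comp x (T_comp y z j) i.
Proof.
move=> hx hy hz hi hj.
have hs1 : 0 < i + j - 1 <= size (T_comp x y i) by rewrite size_comp //; lia.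
have hs2 : 0 < i <= size x by [].
apply: (@eq_from_nth _ munit).
  rewrite !size_comp // ?size_comp //; lia.
move=> k _; rewrite (nth_comp _ _ _ _ hs1) (nth_comp _ _ _ _ hi) !(nth_comp _ _ _ _ hi) !(nth_comp _ _ _ _ hj) size_comp //.
repeat case: ifP => ?; try fin.
Qed.
Lemma par_assoc (x y z : seq M) i j : 0 < size x -> 0 < size y -> 0 < size z ->
  0 < i -> i < j -> j <= size x ->
  T_comp (T_comp x y i) z (j + size y - 1) = T_comp (T_comp x z j) y i.
Proof.
move=> hx hy hz h1 h2 h3.
have hi : 0 < i <= size x by lia.
have hj : 0 < j <= size x by lia.
have hs1 : 0 < j + size y - 1 <= size (T_comp x y i) by rewrite size_comp //; lia.
have hs2 : 0 < i <= size (T_comp x z j) by rewrite size_comp //; lia.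
apply: (@eq_from_nth _ munit).
  rewrite !size_comp //; lia.
move=> k _; rewrite (nth_comp _ _ _ _ hs1) (nth_comp _ _ _ _ hs2) !(nth_comp _ _ _ _ hi) !(nth_comp _ _ _ _ hj).
repeat case: ifP => ?; try fin.
Qed.

Lemma nth_act' n (x : seq M) (s : 'S_n) k : k < n ->
  nth munit (T_act x s) k = nth munit x (permn s k.+1).-1.
Proof. move=> H; by rewrite (nth_act _ _ _ _ H) (permnE _ _ _ H). Qed.

Lemma size_act n (x : seq M) (s : 'S_n) : size (T_act x s) = n.
Proof. by rewrite /T_act size_map size_enum_ord. Qed.
End S.
Ltac fin := solve [ exfalso; lia | rewrite ?mA; repeat (f_equal; try lia) ].

Lemma permn_lt n (s : 'S_n) k : k < n -> 0 < permn s k.+1 <= n.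
Proof. move=> H; rewrite (permnE _ _ _ H) /=; exact: ltn_ord. Qed.

Arguments permn_lt {n} s {k}.
Lemma permn_inj n (s : 'S_n) k l : k < n -> l < n -> permn s k.+1 = permn s l.+1 -> k = l.
Proof.
move=> Hk Hl; rewrite (permnE _ _ _ Hk) (permnE _ _ _ Hl) => [[]] /val_inj/perm_inj [] //.
Qed.

Arguments permn_inj {n} s {k l}.
Lemma equiv (M : monoid) n m (x y : seq M) (s : 'S_n) (t : 'S_m) i :
  size x = n -> size y = m -> 0 < n -> 0 < m -> 0 < i <= n ->
  forall r : 'S_(n + m - 1),
    (forall k : 'I_(n + m - 1), (r k).+1 = pcompn s t i k.+1) ->
    T_comp (T_act x s) (T_act y t) i = T_act (T_comp x y (permn s i)) r.
Proof.
move=> hx hy hn hm hi r Hr.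
case: i hi Hr => [|i'] hi Hr; first by [].
have hi' : i' < n by lia.
have ha := permn_lt s hi'.
have hc : 0 < permn s i'.+1 <= size x by rewrite hx.
have hsa : 0 < i'.+1 <= size (T_act x s) by rewrite size_act.
apply: (@eq_from_nth _ munit).
  rewrite size_comp // !size_act; lia.
rewrite size_comp // !size_act => k hk.
rewrite (nth_act _ _ _ _ _ hk).
have e := Hr (Ordinal hk).
rewrite (_ : nat_of_ord (r (Ordinal hk)) = (pcompn s t i'.+1 k.+1).-1); last by rewrite -e.
rewrite (nth_comp _ _ _ _ _ hsa) size_act (nth_comp _ _ _ _ _ hc) hy /pcompn.
case: (ltnP k i') => h1.
  rewrite (_ : k.+1 < i'.+1 = true); last by lia.
  rewrite !nth_act' //; try lia.
  have hp := permn_lt s (ltn_trans h1 hi').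
  have hne : permn s k.+1 <> permn s i'.+1.
    move/(permn_inj s (ltn_trans h1 hi') hi'); lia.
  move: hp hne (ha); generalize (permn s k.+1) (permn s i'.+1) => p a *.
  case: (ltnP p a) => ?; repeat case: ifP => ?; fin.
case: (ltnP k.+1 i'.+1) => h1'; first by lia.
case: (ltnP k.+1 (i'.+1 + m)) => h2 /=.
  rewrite (_ : k.+1 - i'.+1 + 1 = (k - i').+1); last by lia.
  have hkm : k - i' < m by lia.
  have -> : k < i' + m by lia.
  rewrite !nth_act' //.
  have hp := permn_lt t hkm.
  move: hp (ha); generalize (permn t (k - i').+1) (permn s i'.+1) => p a *.
  repeat case: ifP => ?; fin.
rewrite (_ : k.+1 - m + 1 = (k - m + 1).+1); last by lia.
have hkm : k - m + 1 < n by lia.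
rewrite (_ : k < i' + m = false) /=; last by lia.
rewrite !nth_act' //.
have hp := permn_lt s hkm.
have hne : permn s (k - m + 1).+1 <> permn s i'.+1.
  move/(permn_inj s hkm hi'); lia.
move: hp hne (ha); generalize (permn s (k - m + 1).+1) (permn s i'.+1) => p a *.
case: (ltnP p a) => ?; repeat case: ifP => ?; fin.
Qed.

Lemma act1 (M : monoid) n (x : seq M) : size x = n -> T_act x (1%g : 'S_n) = x.
Proof.
move=> hx; apply: (@eq_from_nth _ munit); first by rewrite size_act.
rewrite size_act => k hk; rewrite (nth_act _ _ _ _ _ hk) perm1 //.
Qed.

Lemma actM (M : monoid) n (x : seq M) (s t : 'S_n) :
  T_act (T_act x s) t = T_act x (t * s)%g.
Proof.
apply: (@eq_from_nth _ munit); first by rewrite !size_act.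
rewrite size_act => k hk; rewrite (nth_act _ _ _ _ _ hk) (nth_act _ _ _ _ _ hk).
rewrite (nth_act _ _ _ _ _ (ltn_ord (t (Ordinal hk)))) permM; do 3 f_equal; exact: val_inj.
Qed.

Lemma surj_map (M N : monoid) (theta : M -> N) :
  (forall b : N, exists a : M, theta a = b) ->
  forall y : seq N, exists x : seq M, map theta x = y.
Proof.
move=> hs; elim=> [|b y [x hx]]; first by exists [::].
have [a ha] := hs b; exists (a :: x); by rewrite /= ha hx.
Qed.

Theorem mainTheorem1 :
  (* T M is a symmetric set-operad with unit (e) *)
  (forall M : monoid,
     is_sym_set_operad (@T_ar M) (T_one M) (@T_comp M) (@T_act M)) /\
  (* T theta is a morphism of set-operads *)
  (forall (M N : monoid) (theta : M -> N), monoid_morph theta ->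
     sym_set_operad_morph (@T_ar M) (T_one M) (@T_comp M) (@T_act M)
                          (@T_ar N) (T_one N) (@T_comp N) (@T_act N)
                          (T_map theta)) /\
  (* functoriality: T id = id and T (phi o theta) = T phi o T theta *)
  (forall (M : monoid) (x : seq M), 0 < size x -> T_map (fun a : M => a) x = x) /\
  (forall (M N P : monoid) (theta : M -> N) (phi : N -> P),
     monoid_morph theta -> monoid_morph phi ->
     forall x : seq M, 0 < size x ->
       T_map (fun a => phi (theta a)) x = T_map phi (T_map theta x)) /\
  (* T preserves injections *)
  (forall (M N : monoid) (theta : M -> N), monoid_morph theta -> injective theta ->
     forall x y : seq M, 0 < size x -> 0 < size y ->
       T_map theta x = T_map theta y -> x = y) /\
  (* T preserves surjections *)
  (forall (M N : monoid) (theta : M -> N), monoid_morph theta ->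
     (forall b : N, exists a : M, theta a = b) ->
     forall y : seq N, 0 < size y ->
       exists x : seq M, 0 < size x /\ T_map theta x = y).
Proof.
split.
  move=> M; rewrite /is_sym_set_operad /T_ar.
  split; first by [].
  split; first by move=> x y i _ _ hi; rewrite size_comp.
  split; first by move=> n x s _ _; rewrite size_act.
  split.
    move=> x _; rewrite /T_comp /T_one /= cats0 -[RHS]map_id; apply: eq_map => a; exact: m1x.
  split.
    move=> x i /andP[h1 h2]; rewrite /T_comp /T_one /=.
    rewrite mx1 -[X in _ = X](cat_take_drop i.-1) [drop i.-1 x](drop_nth munit).
      by rewrite prednK.
    by rewrite /T_ar in h2; lia.
  split; first by move=> x y z i j *; apply: seq_assoc.
  split; first by move=> x y z i j *; apply: par_assoc.
  split; first by move=> n x hx _; exact: act1.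
  split; first by move=> n x s t _ _; exact: actM.
  move=> n m x y s t i hx hy hn hm hi r Hr; exact: equiv.
split.
  move=> M N theta [hm h1]; split.
  - by move=> x _; rewrite /T_ar /T_map size_map.
  - by rewrite /T_map /T_one /= h1.
  - move=> x y i _ _ hi; rewrite /T_map /T_comp !map_cat map_take map_drop -!map_comp.
    rewrite (nth_map munit); last by rewrite /T_ar in hi; lia.
    congr (_ ++ _ ++ _); apply: eq_map => a /=; exact: hm.
  - move=> n x s hx _; rewrite /T_map /T_act -map_comp; apply: eq_map => j /=.
    rewrite (nth_map munit) //; rewrite /T_ar in hx; rewrite hx; exact: ltn_ord.
split; first by move=> M x _; exact: map_id.
split; first by move=> M N P theta phi _ _ x _; exact: map_comp.
split; first by move=> M N theta _ hi x y _ _; exact: inj_map.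
move=> M N theta _ hs y hy; have [x hx] := surj_map _ _ _ hs y.
by exists x; rewrite -(size_map theta) /T_map hx.
Qed.
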